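(* Let $X$ be a $T_1$ topological space with at least two points and let $f\neq g$ be vertices of $\Gamma(C_c(X)_F)$. Then (i) $d(f,g)=1$ iff $Z(f)\cup Z(g)=X$; (ii) $d(f,g)=2$ iff $Z(f)\cup Z(g)\neq X$ and $Z(f)\cap Z(g)\neq\emptyset$; (iii) $d(f,g)=3$ iff $Z(f)\cup Z(g)\neq X$ and $Z(f)\cap Z(g)=\emptyset$.
   Context: $C_c(X)_F$ denotes the set of all functions $f:X\to\mathbb{R}$ whose range is countable and whose set of points of discontinuity is finite; it is a commutative ring under pointwise operations. $Z(f)=\{x:f(x)=0\}$. $\Gamma(C_c(X)_F)$ is the zero-divisor graph: its vertices are the nonzero zero divisors of $C_c(X)_F$ (equivalently the nonzero $f$ with $Z(f)\neq\emptyset$), and distinct vertices $f,g$ are adjacent iff $fg=0$. $d(f,g)$ is the length of a shortest path between $f$ and $g$. *)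

(* Defs.v *)
From HB Require Import structures.
From mathcomp Require Import all_boot all_order all_algebra.
From mathcomp Require Import all_classical all_reals all_analysis.
Set Implicit Arguments. Unset Strict Implicit. Unset Printing Implicit Defensive.
Import Order.TTheory GRing.Theory Num.Theory.
Import numFieldNormedType.Exports.
Local Open Scope classical_set_scope.
Local Open Scope ring_scope.

Definition CcF {X : topologicalType} {R : realType} (f : X -> R) : Prop :=
  countable (range f) /\ finite_set [set x : X | ~ {for x, continuous f}].

Definition Zset {X : topologicalType} {R : realType} (f : X -> R) : set X :=
  [set x | f x = 0].

Definition vertex {X : topologicalType} {R : realType} (f : X -> R) : Prop :=
  CcF f /\ f <> (fun _ => 0) /\
  exists h : X -> R, CcF h /\ h <> (fun _ => 0) /\ (fun x => f x * h x) = (fun _ => 0).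

Definition adj {X : topologicalType} {R : realType} (f g : X -> R) : Prop :=
  vertex f /\ vertex g /\ f <> g /\ (fun x => f x * g x) = (fun _ => 0).

Definition walk {X : topologicalType} {R : realType} (n : nat) (f g : X -> R) : Prop :=
  exists v : nat -> (X -> R), v 0%N = f /\ v n = g /\
    (forall i, (i < n)%N -> adj (v i) (v i.+1)).

Definition zd_dist {X : topologicalType} {R : realType} (f g : X -> R) (n : nat) : Prop :=
  walk n f g /\ forall m, (m < n)%N -> ~ walk m f g.

(* Main.v *)
Require Import Defs.
From HB Require Import structures.
From mathcomp Require Import all_boot all_order all_algebra.
From mathcomp Require Import all_classical all_reals all_analysis.
Import Order.TTheory GRing.Theory Num.Theory.
Import numFieldNormedType.Exports.
Local Open Scope classical_set_scope.
Local Open Scope ring_scope.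

Definition ind {X : topologicalType} {R : realType} (a : X) : X -> R :=
  fun y => if y == a then 1 else 0.

Lemma ind_CcF (X : topologicalType) (R : realType) (a : X) :
  accessible_space X -> CcF (@ind X R a).
Proof.
move=> hT; split.
  apply: finite_set_countable; apply: (sub_finite_set _ (finite_set2 (0:R) 1)).
  by move=> _ [y _ <-]; rewrite /ind; case: ifP => _; [right|left].
apply: (sub_finite_set _ (finite_set1 a)) => y /= hy.
apply/eqP; apply: contra_notP hy => ya.
have [A [oA Ay aA]] := hT y a (introN idP ya).
apply: (near_cst_continuous 0).
apply: (filterS _ (open_nbhs_nbhs (conj oA (set_mem Ay)))) => z zA.
rewrite /ind; case: eqP => // za; subst z.
by move: aA; rewrite inE => /(_ zA).
Qed.

Set Implicit Arguments.
Section S.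
Variables (X : topologicalType) (R : realType).
Hypothesis hT1 : accessible_space X.
Hypothesis hX : exists x y : X, x <> y.

Lemma prod0P (f g : X -> R) :
  (fun x => f x * g x) = (fun _ => 0) <-> Zset f `|` Zset g = setT.
Proof.
split.
  move=> h; apply/seteqP; split => // x _.
  have := congr1 (fun F => F x) h => /= /eqP; rewrite mulf_eq0 => /orP[]/eqP.
  by left. by right.
move=> h; apply/funext => x.
have : (Zset f `|` Zset g) x by rewrite h.
by case => ->; rewrite ?mul0r ?mulr0.
Qed.

Lemma vertexZ (f : X -> R) : vertex f -> exists a, f a = 0.
Proof.
move=> [_ [_ [h [_ [hn hp]]]]].
have [a ha] : exists a, h a <> 0.
  apply: contra_notP hn => H; apply/funext => a; apply: contra_notP (H) => ?.
  by exists a.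
exists a; have := congr1 (fun F => F a) hp => /= /eqP.
by rewrite mulf_eq0 => /orP[/eqP//|/eqP].
Qed.

Lemma ind_a (a : X) : @ind X R a a = 1.
Proof. by rewrite /ind eqxx. Qed.

Lemma ind_ne0 (a : X) : @ind X R a <> (fun _ => 0).
Proof. by move=> /(congr1 (fun F => F a)) /=; rewrite ind_a => /eqP; rewrite oner_eq0. Qed.

Lemma ind_mul (a b : X) : a <> b ->
  (fun x => @ind X R a x * @ind X R b x) = (fun _ => 0).
Proof.
move=> ab; apply/funext => x; rewrite /ind.
case: (eqVneq x a) => [->|_]; last by rewrite mul0r.
by case: eqP => // ?; rewrite mulr0.
Qed.

Lemma ind_vertex (a : X) : vertex (@ind X R a).
Proof.
split; first exact: ind_CcF.
split; first exact: ind_ne0.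
have [x [y xy]] := hX.
have [b ab] : exists b, a <> b.
  case: (eqVneq a x) => [->|]; first by exists y.
  by move=> /eqP; exists x.
exists (ind b); split; first exact: ind_CcF.
split; first exact: ind_ne0.
exact: ind_mul.
Qed.

Lemma adjP (f g : X -> R) : vertex f -> vertex g -> f <> g ->
  adj f g <-> Zset f `|` Zset g = setT.
Proof.
move=> vf vg fg; split; first by case=> _ [_ [_ /prod0P]].
by move/prod0P => h; split.
Qed.

Lemma walk0 (f g : X -> R) : walk 0 f g -> f = g.
Proof. by case=> v [<- [<- _]]. Qed.

Lemma walk1 (f g : X -> R) : walk 1 f g -> adj f g.
Proof. by case=> v [<- [<- H]]; exact: H. Qed.

Lemma adj_walk1 (f g : X -> R) : adj f g -> walk 1 f g.
Proof.
move=> h; exists (fun i => if i is 0%N then f else g); split => //; split => //.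
by case=> // -[].
Qed.

Lemma walk2 (f g : X -> R) : walk 2 f g -> exists a, f a = 0 /\ g a = 0.
Proof.
case=> v [<- [<- H]].
have [_ [[_ [hn _]] [_ p1]]] := H 0%N isT.
have [_ [_ [_ p2]]] := H 1%N isT.
have [a ha] : exists a, v 1%N a <> 0.
  apply: contra_notP hn => K; apply/funext => a; apply: contra_notP (K) => ?.
  by exists a.
exists a; split.
  have := congr1 (fun F => F a) p1 => /= /eqP.
  by rewrite mulf_eq0 => /orP[/eqP//|/eqP].
have := congr1 (fun F => F a) p2 => /= /eqP.
by rewrite mulf_eq0 => /orP[/eqP|/eqP//].
Qed.

Lemma mk_walk2 (f g : X -> R) a : vertex f -> vertex g -> f a = 0 -> g a = 0 ->
  walk 2 f g.
Proof.
move=> vf vg fa ga.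
exists (fun i => match i with 0%N => f | 1%N => ind a | _ => g end).
split => //; split => //.
case=> [_|[_|//]].
  split => //; split; first exact: ind_vertex.
  split; first by move=> /(congr1 (fun F => F a)); rewrite ind_a fa => /eqP; rewrite eq_sym oner_eq0.
  apply/funext => x; rewrite /ind; case: eqP => [->|_]; by rewrite ?fa ?mul0r ?mulr0.
split; first exact: ind_vertex.
split => //; split; first by move=> /(congr1 (fun F => F a)); rewrite ind_a ga => /eqP; rewrite oner_eq0.
apply/funext => x; rewrite /ind; case: eqP => [->|_]; by rewrite ?ga ?mul0r ?mulr0.
Qed.

Lemma mk_walk3 (f g : X -> R) a b : vertex f -> vertex g -> f a = 0 -> g b = 0 ->
  a <> b -> walk 3 f g.
Proof.
move=> vf vg fa gb ab.
exists (fun i => match i with 0%N => f | 1%N => ind a | 2%N => ind b | _ => g end).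
split => //; split => //.
case=> [_|[_|[_|//]]].
- split => //; split; first exact: ind_vertex.
  split; first by move=> /(congr1 (fun F => F a)); rewrite ind_a fa => /eqP; rewrite eq_sym oner_eq0.
  apply/funext => x; rewrite /ind; case: eqP => [->|_]; by rewrite ?fa ?mul0r ?mulr0.
- split; first exact: ind_vertex.
  split; first exact: ind_vertex.
  split; last exact: ind_mul.
  by move=> /(congr1 (fun F => F a)); rewrite ind_a /ind; case: eqP => // _ /eqP; rewrite oner_eq0.
- split; first exact: ind_vertex.
  split => //; split; first by move=> /(congr1 (fun F => F b)); rewrite ind_a gb => /eqP; rewrite oner_eq0.
  apply/funext => x; rewrite /ind; case: eqP => [->|_]; by rewrite ?gb ?mul0r ?mulr0.
Qed.

End S.

Theorem theorem8p5 (X : topologicalType) (R : realType)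
  (hT1 : accessible_space X) (hX : exists x y : X, x <> y)
  (f g : X -> R) (hf : vertex f) (hg : vertex g) (hfg : f <> g) :
  (zd_dist f g 1 <-> Zset f `|` Zset g = setT) /\
  (zd_dist f g 2 <-> (Zset f `|` Zset g <> setT /\ Zset f `&` Zset g <> set0)) /\
  (zd_dist f g 3 <-> (Zset f `|` Zset g <> setT /\ Zset f `&` Zset g = set0)).
Proof.
have nw0 : ~ walk 0 f g by move/walk0.
have w1 : walk 1 f g <-> Zset f `|` Zset g = setT.
  split; first by move/walk1/(adjP hf hg hfg).
  by move/(adjP hf hg hfg)/adj_walk1.
have w2 : walk 2 f g -> Zset f `&` Zset g <> set0.
  move/walk2 => [a [fa ga]] /seteqP [/(_ a) H _]; exact: H.
have w2' : Zset f `&` Zset g <> set0 -> walk 2 f g.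
  move=> nI; have [a [fa ga]] : exists a, (Zset f `&` Zset g) a.
    by apply: contra_notP nI => K; apply/seteqP; split=> // x Hx; apply: K; exists x.
  exact: (@mk_walk2 _ _ hT1 hX f g a hf hg fa ga).
split; [|split].
- split; first by case=> /w1.
  move=> h; split; first exact/w1.
  by case=> // _; exact: nw0.
- split.
    case=> W H; split; last exact: w2.
    by move/w1 => W1; exact: (H 1%N).
  move=> [nU nI]; split; first exact: w2'.
  by case=> [|[|//]] _ //; move/w1.
- split.
    case=> W H; split; first by move/w1 => W1; exact: (H 1%N).
    apply: contra_notP (H 2%N isT) => nI; exact: w2'.
  move=> [nU nI].
  have [a fa] := vertexZ hf; have [b gb] := vertexZ hg.
  have ab : a <> b.
    by move=> e; subst b; move/seteqP: nI => [/(_ a) H _]; apply: H.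
  split; first exact: (@mk_walk3 _ _ hT1 hX f g a b hf hg fa gb ab).
  case=> [|[|[|//]]] _ //; first by move/w1.
  by move/w2.
Qed.
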